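(* Let $u_n:\mathbb R^p\to\mathbb R^p$, $n\ge1$, be a sequence of random differentiable estimating functions and $\mathbf J_n(\boldsymbol\theta)=-\frac{d}{d\boldsymbol\theta^\top}u_n(\boldsymbol\theta)$. Assume there exist invertible symmetric matrices $\mathbf V_n$ and parameter values $\boldsymbol\theta^*_n\in\mathbb R^p$ such that: (G1) $\|\mathbf V_n^{-1}\|\to0$; (G2) there exists $l>0$ with $\mathbb P(l_n<l)\to0$, where $l_n=\inf_{\|\boldsymbol\phi\|=1}\boldsymbol\phi^\top\mathbf V_n^{-1}\mathbf J_n(\boldsymbol\theta^*_n)\mathbf V_n^{-1}\boldsymbol\phi$; (G3) for every $d>0$, $\gamma_{nd}:=\sup_{\|\mathbf V_n(\boldsymbol\theta-\boldsymbol\theta^*_n)\|\le d}\|\mathbf V_n^{-1}\{\mathbf J_n(\boldsymbol\theta)-\mathbf J_n(\boldsymbol\theta^*_n)\}\mathbf V_n^{-1}\|_M\to0$ in probability; (G4) $\mathbf V_n^{-1}u_n(\boldsymbol\theta^*_n)$ is bounded in probability, i.e. for every $\epsilon>0$ there is $d$ with $\mathbb P(\|\mathbf V_n^{-1}u_n(\boldsymbol\theta^*_n)\|>d)\le\epsilon$ for all sufficiently large $n$. Then for every $\epsilon>0$ there exists $d>0$ such that, for all sufficiently large $n$, \[ \mathbb P\big\{\exists\,\tilde{\boldsymbol\theta}_n:\ u_n(\tilde{\boldsymbol\theta}_n)=0\ \text{and}\ \|\mathbf V_n(\tilde{\boldsymbol\theta}_n-\boldsymbol\theta^*_n)\|<d\big\}>1-\epsilon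 . \]
   Context: For a matrix $\mathbf A=[a_{ij}]$, $\|\mathbf A\|_M=\max_{i,j}|a_{ij}|$; $\|\cdot\|$ denotes the Euclidean norm for vectors and the corresponding operator norm for matrices. The distribution of $u_n$ is governed by an underlying probability measure $\mathbb P$. *)

(* Defs.v *)
From HB Require Import structures.
From mathcomp Require Import all_boot all_order all_algebra.
From mathcomp Require Import all_classical all_reals all_analysis.
Set Implicit Arguments. Unset Strict Implicit. Unset Printing Implicit Defensive.
Import Order.TTheory GRing.Theory Num.Theory.
Import numFieldNormedType.Exports.
Local Open Scope classical_set_scope.
Local Open Scope ring_scope.

Definition enorm (R : realType) (p : nat) (v : 'cV[R]_p) : R :=
  Num.sqrt (\sum_(i < p) v i 0 ^+ 2).

Definition opnorm (R : realType) (p : nat) (A : 'M[R]_p) : R :=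
  sup [set enorm (A *m x) | x in [set x : 'cV[R]_p | enorm x <= 1]].

Definition mnormM (R : realType) (m n : nat) (A : 'M[R]_(m, n)) : R :=
  \big[Num.max/0]_(i < m) \big[Num.max/0]_(j < n) `|A i j|.

(* J(theta) = - d u / d theta^T : entry (i,j) is - d u_i / d theta_j. *)
Definition jacobianN (R : realType) (p : nat) (f : 'cV[R]_p -> 'cV[R]_p)
    (theta : 'cV[R]_p) : 'M[R]_p :=
  \matrix_(i < p, j < p) - ('D_(delta_mx j 0) f theta) i 0.

(* Outer and inner probability of an arbitrary (possibly non-measurable) event. *)
Definition Pout d (T : measurableType d) (R : realType) (P : probability T R)
    (A : set T) : \bar R :=
  ereal_inf [set P B | B in [set B | measurable B /\ A `<=` B]].

Definition Pin d (T : measurableType d) (R : realType) (P : probability T R)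
    (A : set T) : \bar R :=
  ereal_sup [set P B | B in [set B | measurable B /\ B `<=` A]].

(* Main.v *)
Require Import Defs.
From HB Require Import structures.
From mathcomp Require Import all_boot all_order all_algebra.
From mathcomp Require Import all_classical all_reals all_analysis.
From mathcomp Require Import ring lra.
Set Implicit Arguments. Unset Strict Implicit. Unset Printing Implicit Defensive.
Import Order.TTheory GRing.Theory Num.Theory.
Import numFieldNormedType.Exports.
Local Open Scope classical_set_scope.
Local Open Scope ring_scope.

Section Helpers.
Variable R : realType.

Lemma mx_entry_le m n (x : 'M[R]_(m,n)) i j : `|x i j| <= `|x|.
Proof.
rewrite [leRHS]/Num.Def.normr/= mx_normrE.
exact: (le_bigmax _ _ (i, j)).
Qed.

Lemma linmx_bound m n (W : normedModType R) (g : {linear 'M[R]_(m,n) -> W}) x :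
  `|g x| <= (\sum_(i < m) \sum_(j < n) `|g (delta_mx i j)|) * `|x|.
Proof.
rewrite {1}(matrix_sum_delta x) linear_sum.
rewrite (le_trans (ler_norm_sum _ _ _))// mulr_suml ler_sum// => i _.
rewrite linear_sum (le_trans (ler_norm_sum _ _ _))// mulr_suml ler_sum// => j _.
by rewrite linearZ normrZ mulrC ler_wpM2l// mx_entry_le.
Qed.

Lemma linmx_continuous m n (W : normedModType R) (g : {linear 'M[R]_(m,n) -> W}) :
  continuous g.
Proof.
apply: bounded_linear_continuous; apply/linear_boundedP.
near=> r => x; apply: (le_trans (linmx_bound g x)).
apply: ler_wpM2r => //; near: r; apply: nbhs_pinfty_ge; rewrite num_real.
Unshelve. all: by end_near. Qed.

End Helpers.
Set Implicit Arguments. Unset Strict Implicit. Unset Printing Implicit Defensive.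
Import Order.TTheory GRing.Theory Num.Theory.
Import numFieldNormedType.Exports.
Local Open Scope classical_set_scope.
Local Open Scope ring_scope.

Section Calc.
Variable R : realType.

Lemma lin_diff m n (W : normedModType R) (g : 'M[R]_(m,n) -> W) (lg : linear g) x :
  is_diff x g g.
Proof.
pose gL : {linear _ -> _} := HB.pack g (GRing.isLinear.Build _ _ _ _ _ lg).
have gc : continuous gL by exact: linmx_continuous.
apply: DiffDef; first exact: (linear_differentiable x gc).
exact: (diff_lin x gc).
Qed.

Lemma is_diff_sumF (V W : normedModType R) n (F dF : 'I_n -> V -> W) x :
  (forall i, is_diff x (F i) (dF i)) ->
  is_diff x (fun y => \sum_(i < n) F i y) (fun v => \sum_(i < n) dF i v).
Proof.
elim: n F dF => [|n IH] F dF H.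
  have -> : (fun y : V => \sum_(i < 0) F i y) = cst 0.
    by apply/funext => y; rewrite big_ord0.
  have -> : (fun y : V => \sum_(i < 0) dF i y) = 0.
    by apply/funext => y; rewrite big_ord0.
  exact: is_diff_cst.
have -> : (fun y => \sum_(i < n.+1) F i y) =
   (fun y => \sum_(i < n) F (widen_ord (leqnSn n) i) y) + F ord_max.
  by apply/funext => y; rewrite big_ord_recr.
have -> : (fun y => \sum_(i < n.+1) dF i y) =
   (fun y => \sum_(i < n) dF (widen_ord (leqnSn n) i) y) + dF ord_max.
  by apply/funext => y; rewrite big_ord_recr.
have := IH (fun i => F (widen_ord (leqnSn n) i)) (fun i => dF (widen_ord (leqnSn n) i)) (fun i => H _).
move=> h1; have h2 := H ord_max.
exact: is_diffD.
Qed.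

Variable p : nat.
Definition dot (x y : 'cV[R]_p) : R := \sum_(i < p) x i 0 * y i 0.
Definition sq (x : 'cV[R]_p) : R := dot x x.

Lemma is_diff_sq y : is_diff y sq (fun v => 2 * dot y v).
Proof.
have H : forall i : 'I_p, is_diff y (fun z : 'cV[R]_p => z i 0 * z i 0)
     (fun v => y i 0 * v i 0 + y i 0 * v i 0).
  move=> i.
  have hc : is_diff y (fun z : 'cV[R]_p => z i 0) (fun z : 'cV[R]_p => z i 0).
    by apply: lin_diff => a u v; rewrite !mxE.
  have := @is_diffM R _ (fun z : 'cV[R]_p => z i 0) (fun z : 'cV[R]_p => z i 0) _ _ y hc hc.
  by [].
have := is_diff_sumF H.
have -> : (fun v => 2 * dot y v) = (fun v => \sum_(i < p) (y i 0 * v i 0 + y i 0 * v i 0)).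
  by apply/funext => v; rewrite /dot big_split /= mulr2n mulrDl !mul1r.
by [].
Qed.

End Calc.
Set Implicit Arguments. Unset Strict Implicit. Unset Printing Implicit Defensive.
Import Order.TTheory GRing.Theory Num.Theory.
Import numFieldNormedType.Exports.
Local Open Scope classical_set_scope.
Local Open Scope ring_scope.

Section Jac.
Variables (R : realType) (p : nat).
Implicit Types (f : 'cV[R]_p -> 'cV[R]_p).

Lemma D_jac f th v : differentiable f th ->
  'D_v f th = - (jacobianN f th *m v).
Proof.
move=> df; rewrite deriveE //.
rewrite {1}(matrix_sum_delta v) linear_sum.
apply/matrixP => i k; rewrite (ord1 k) !mxE summxE.
rewrite -sumrN; apply: eq_bigr => j _.
rewrite big_ord1 linearZ /= -deriveE // !mxE mulNr opprK mulrC.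
by rewrite (ord1 (0:'I_1)).
Qed.

End Jac.

Section Chain.
Variables (R : realType) (p : nat).

Lemma chain_derive (g dg : 'cV[R]_p -> R) (f : 'cV[R]_p -> 'cV[R]_p) w th t :
  differentiable f (t *: w + th) -> is_diff (f (t *: w + th)) g dg ->
  is_derive t 1 (fun s : R => g (f (s *: w + th))) (dg ('D_w f (t *: w + th))).
Proof.
move=> df dgH.
have ha : is_diff t (( *:%R^~ w) + cst th : R -> 'cV[R]_p) (( *:%R^~ w) + 0).
  by apply: is_diffD.
have hf : is_diff ((( *:%R^~ w) + cst th : R -> 'cV[R]_p) t) f ('d f (t *: w + th)).
  exact: differentiableP.
have hc := is_diff_comp ha hf.
have hg := is_diff_comp hc dgH.
have -> : (fun s : R => g (f (s *: w + th))) = g \o (f \o (( *:%R^~ w) + cst th)) by [].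
apply: DeriveDef; first exact: diff_derivable.
rewrite deriveE // diff_val /= -deriveE //.
have -> : (( *:%R^~ w + 0) 1 : 'cV[R]_p) = w by apply: (etrans (_ : _ = 1 *: w + 0)) => //; rewrite scale1r addr0.
by [].
Qed.

End Chain.
Set Implicit Arguments. Unset Strict Implicit. Unset Printing Implicit Defensive.
Import Order.TTheory GRing.Theory Num.Theory.
Import numFieldNormedType.Exports.
Local Open Scope classical_set_scope.
Local Open Scope ring_scope.

Section Alg.
Variables (R : realType) (p : nat).
Implicit Types (x y z : 'cV[R]_p) (M N : 'M[R]_p).

Definition quad M x : R := (x^T *m M *m x) 0 0.

Lemma quad_dot M x : quad M x = dot x (M *m x).
Proof.
rewrite /quad /dot -mulmxA mxE; apply: eq_bigr => i _; by rewrite mxE.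
Qed.

Lemma dotC x y : dot x y = dot y x.
Proof. by apply: eq_bigr => i _; rewrite mulrC. Qed.

Lemma dotDr x y z : dot x (y + z) = dot x y + dot x z.
Proof. by rewrite /dot -big_split; apply: eq_bigr => i _; rewrite mxE mulrDr. Qed.

Lemma dotZr a x y : dot x (a *: y) = a * dot x y.
Proof. rewrite /dot mulr_sumr; apply: eq_bigr => i _; rewrite mxE; ring. Qed.

Lemma dotNr x y : dot x (- y) = - dot x y.
Proof. rewrite /dot -sumrN; apply: eq_bigr => i _; rewrite mxE; ring. Qed.

Lemma dotZl a x y : dot (a *: x) y = a * dot x y.
Proof. by rewrite dotC dotZr dotC. Qed.

Lemma sqZ a x : sq (a *: x) = a ^+ 2 * sq x.
Proof. by rewrite /sq dotZl dotZr mulrA expr2. Qed.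

Lemma sq_ge0 x : 0 <= sq x.
Proof. by apply: sumr_ge0 => i _; rewrite -expr2 sqr_ge0. Qed.

Lemma sq_eq0 x : sq x = 0 -> x = 0.
Proof.
move=> /eqP; rewrite psumr_eq0; last by move=> i _; rewrite -expr2 sqr_ge0.
move=> /allP H; apply/matrixP => i k; rewrite (ord1 k) mxE.
have := H i; rewrite mem_index_enum => /(_ isT) /=.
by rewrite mulf_eq0 orbb => /eqP.
Qed.

Lemma sq0 : sq (0 : 'cV[R]_p) = 0.
Proof. by rewrite /sq /dot big1 // => i _; rewrite mxE mul0r. Qed.

Lemma amgm a x y : 0 < a -> 2 * a * dot x y <= a ^+ 2 * sq x + sq y.
Proof.
move=> a0; rewrite /sq /dot mulr_sumr mulr_sumr -big_split /=.
apply: ler_sum => i _.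
set u := x i 0; set v := y i 0.
have : 0 <= (a * u - v) ^+ 2 by rewrite sqr_ge0.
move=> h; nra.
Qed.

Lemma quadZ M a x : quad M (a *: x) = a ^+ 2 * quad M x.
Proof.
rewrite !quad_dot dotZl -scalemxAr dotZr; ring.
Qed.

Lemma quad0 M : quad M 0 = 0.
Proof. by rewrite /quad mulmx0 mxE. Qed.

Lemma quadB M N x : quad (M - N) x = quad M x - quad N x.
Proof. by rewrite !quad_dot mulmxBl dotDr dotNr. Qed.

Lemma mnormM_entry M i j : `|M i j| <= mnormM M.
Proof.
rewrite /mnormM; apply: le_trans (le_bigmax _ _ i).
exact: le_bigmax.
Qed.

Lemma quad_bound M x : `|quad M x| <= mnormM M * p%:R * sq x.
Proof.
rewrite quad_dot /dot.
apply: (le_trans (ler_norm_sum _ _ _)).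
have E : forall i, `|x i 0 * (M *m x) i 0| <=
   \sum_(j < p) mnormM M * ((x i 0) ^+ 2 + (x j 0) ^+ 2) / 2.
  move=> i; rewrite mxE mulr_sumr (le_trans (ler_norm_sum _ _ _))//.
  apply: ler_sum => j _.
  have hm := mnormM_entry M i j.
  have h0 : 0 <= `|M i j| by [].
  rewrite normrM normrM.
  set a := x i 0; set b := x j 0; set m := mnormM M; set e := `|M i j|.
  have ha : `|a| ^+ 2 = a ^+ 2 by rewrite real_normK ?num_real.
  have hb : `|b| ^+ 2 = b ^+ 2 by rewrite real_normK ?num_real.
  have : 0 <= (`|a| - `|b|) ^+ 2 by rewrite sqr_ge0.
  have hna : 0 <= `|a| by [].
  have hnb : 0 <= `|b| by [].
  rewrite -ha -hb => h.
  have : `|a| * (e * `|b|) <= `|a| * (m * `|b|).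
    by apply: ler_wpM2l => //; apply: ler_wpM2r.
  have hm0 : 0 <= m by apply: le_trans hm.
  have := mulr_ge0 hm0 h.
  rewrite !expr2 => h1 h2; nra.
apply: (le_trans (ler_sum _ (fun i _ => E i))).
set m := mnormM M.
have -> : \sum_(i < p) \sum_(j < p) m * (x i 0 ^+ 2 + x j 0 ^+ 2) / 2
   = \sum_(i < p) (m / 2 * p%:R * (x i 0 * x i 0) + m / 2 * sq x).
  apply: eq_bigr => i _.
  rewrite (eq_bigr (fun j => m / 2 * (x i 0 * x i 0) + m / 2 * (x j 0 * x j 0))); last first.
    by move=> j _; rewrite !expr2; ring.
  by rewrite big_split /= sumr_const card_ord -mulr_sumr -mulr_natr /sq /dot; ring.
rewrite big_split /= -mulr_sumr sumr_const card_ord -/(dot x x) -/(sq x) mulr_natr.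
rewrite le_eqVlt; apply/orP; left; apply/eqP.
have -> : m / 2 * sq x *+ p = m / 2 * sq x * p%:R by rewrite mulr_natr.
rewrite [X in _ + X]mulrAC -mulrDl.
by rewrite -mulr_natr -mulrDl -splitr.
Qed.

End Alg.
Set Implicit Arguments. Unset Strict Implicit. Unset Printing Implicit Defensive.
Import Order.TTheory GRing.Theory Num.Theory.
Import numFieldNormedType.Exports.
Local Open Scope classical_set_scope.
Local Open Scope ring_scope.

Lemma lin_aux (R : realType) (a b b0 : R) : a <= b0 -> -(a/2) <= b - b0 -> a/2 <= b.
Proof. lra. Qed.

Section Core.
Variables (R : realType) (p : nat) (f : 'cV[R]_p -> 'cV[R]_p) (W : 'M[R]_p)
  (ts : 'cV[R]_p) (l eta c D : R).
Hypothesis hf : forall th, differentiable f th.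
Hypothesis l0 : 0 < l.
Hypothesis heta : p%:R * eta <= l / 2.
Definition AA th := W *m jacobianN f th *m W.
Hypothesis H2 : forall phi, sq phi = 1 -> l <= quad (AA ts) phi.
Hypothesis H3 : forall x, sq x <= D ^+ 2 -> mnormM (AA (ts + W *m x) - AA ts) <= eta.

Lemma quad_lb x phi : sq x <= D ^+ 2 -> l / 2 * sq phi <= quad (AA (ts + W *m x)) phi.
Proof.
move=> hx.
have h1 : l * sq phi <= quad (AA ts) phi.
  have [s0|sn0] := eqVneq (sq phi) 0.
    by rewrite s0 (sq_eq0 s0) quad0 mulr0.
  have sp : 0 < sq phi by rewrite lt_def sn0 sq_ge0.
  set r := Num.sqrt (sq phi).
  have rp : 0 < r by rewrite sqrtr_gt0.
  have hr : r ^+ 2 = sq phi by rewrite sqr_sqrtr // ltW.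
  have hs : sq (r^-1 *: phi) = 1 by rewrite sqZ exprVn hr mulVf.
  move: (H2 hs); rewrite quadZ exprVn hr ler_pdivlMl //.
  by rewrite mulrC.
have h2 : `|quad (AA (ts + W *m x) - AA ts) phi| <= l / 2 * sq phi.
  apply: (le_trans (quad_bound _ _)).
  apply: ler_wpM2r; first exact: sq_ge0.
  apply: le_trans heta; rewrite mulrC.
  by apply: ler_wpM2l => //; apply: H3.
move: h2; rewrite quadB ler_norml => /andP[h2 _].
have e : l / 2 * sq phi = l * sq phi / 2 by rewrite mulrAC.
rewrite e in h2 *.
exact: lin_aux h1 h2.
Qed.

End Core.
Set Implicit Arguments. Unset Strict Implicit. Unset Printing Implicit Defensive.
Import Order.TTheory GRing.Theory Num.Theory.
Import numFieldNormedType.Exports.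
Local Open Scope classical_set_scope.
Local Open Scope ring_scope.

Section Core2.
Variables (R : realType) (p : nat) (f : 'cV[R]_p -> 'cV[R]_p) (W : 'M[R]_p)
  (ts : 'cV[R]_p) (l eta c D : R).
Hypothesis hf : forall th, differentiable f th.
Hypothesis l0 : 0 < l.
Hypothesis heta : p%:R * eta <= l / 2.
Hypothesis H2 : forall phi, sq phi = 1 -> l <= quad (AA f W ts) phi.
Hypothesis H3 : forall x, sq x <= D ^+ 2 ->
  mnormM (AA f W (ts + W *m x) - AA f W ts) <= eta.

Lemma AA_quad th x : dot x (W *m - (jacobianN f th *m (W *m x))) = - quad (AA f W th) x.
Proof. by rewrite quad_dot /AA -!mulmxA mulmxN dotNr. Qed.

Lemma mvt_step x : sq x <= D ^+ 2 ->
  dot x (W *m f (ts + W *m x)) <= dot x (W *m f ts) - l / 2 * sq x.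
Proof.
move=> hx.
set w := W *m x.
pose g := fun z : 'cV[R]_p => dot x (W *m z).
have lg : linear g.
  by move=> a u v; rewrite /g mulmxDr -scalemxAr dotDr dotZr.
have hg z : is_diff z g g := lin_diff lg z.
pose h := fun t : R => g (f (t *: w + ts)).
have hd (t : R) : is_derive t 1 h (g ('D_w f (t *: w + ts))).
  exact: (chain_derive (hf _) (hg _)).
have cont : {within `[0, 1], continuous h}.
  apply: derivable_within_continuous => t _; exact: ex_derive.
have [t t01 E] := MVT ltr01 (fun t _ => hd t) cont.
have -> : dot x (W *m f (ts + W *m x)) = h 1 by rewrite /h /g scale1r addrC.
have -> : dot x (W *m f ts) = h 0 by rewrite /h /g scale0r add0r.
have E2 : h 1 = h 0 + g ('D_w f (t *: w + ts)) by rewrite subr0 mulr1 in E; rewrite -E addrC subrK.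
rewrite E2 /g D_jac // AA_quad.
have -> : t *: w + ts = ts + W *m (t *: x) by rewrite addrC /w scalemxAr.
have ht : sq (t *: x) <= D ^+ 2.
  rewrite sqZ; apply: le_trans hx.
  move: t01; rewrite in_itv /= => /andP[t0 t1].
  have : t ^+ 2 <= 1 by rewrite expr2; nra.
  by move=> h1; rewrite -[leRHS]mul1r; apply: ler_wpM2r => //; exact: sq_ge0.
have := quad_lb heta H2 H3 x ht.
move: (quad (AA f W (ts + W *m (t *: x))) x) (l / 2 * sq x) (h 0) => a b c0 hab.
lra.
Qed.

End Core2.
Set Implicit Arguments. Unset Strict Implicit. Unset Printing Implicit Defensive.
Import Order.TTheory GRing.Theory Num.Theory.
Import numFieldNormedType.Exports.
Local Open Scope classical_set_scope.
Local Open Scope ring_scope.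

Section Cpt.
Variables (R : realType) (p : nat).

Lemma linear_cont m n (W : normedModType R) (g : 'M[R]_(m,n) -> W) : linear g -> continuous g.
Proof.
move=> lg.
pose gL : {linear _ -> _} := HB.pack g (GRing.isLinear.Build _ _ _ _ _ lg).
have H : continuous gL by apply: linmx_continuous.
exact: H.
Qed.

Lemma sq_cont : continuous (@sq R p).
Proof. move=> x; apply: differentiable_continuous; by case: (@is_diff_sq R p x). Qed.

Lemma entry_sq (x : 'cV[R]_p) i : x i 0 ^+ 2 <= sq x.
Proof.
rewrite /sq /dot (bigD1 i) //= -expr2 lerDl.
by apply: sumr_ge0 => j _; rewrite -expr2 sqr_ge0.
Qed.

Lemma compact_K (D : R) : compact [set x : 'cV[R]_p | sq x <= D ^+ 2].
Proof.
have tc : continuous (fun y : 'rV[R]_p => y^T).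
  by apply: linear_cont => a u v; rewrite linearP.
have tc' : continuous (fun y : 'cV[R]_p => y^T).
  by apply: linear_cont => a u v; rewrite linearP.
pose K' := [set y : 'rV[R]_p | sq y^T <= D ^+ 2].
have cK' : compact K'.
  apply: bounded_closed_compact.
    rewrite /= /bounded_near; near=> M => y /= hy.
    rewrite [leLHS]/Num.Def.normr /= mx_normrE.
    apply: bigmax_le => [|[i j] _ /=]; first by near: M; apply: nbhs_pinfty_ge; rewrite num_real.
    rewrite (ord1 i).
    have h1 : `|y 0 j| ^+ 2 <= `|D| ^+ 2.
      rewrite !real_normK ?num_real //.
      apply: le_trans hy; have := entry_sq y^T j; by rewrite mxE.
    have h2 : `|y 0 j| <= `|D| by rewrite -ler_sqr ?nnegrE.
    apply: le_trans h2 _; near: M; apply: nbhs_pinfty_ge; rewrite num_real.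
  1: done.
  change (closed ((fun y : 'rV[R]_p => sq y^T) @^-1` [set r | r <= D ^+ 2])).
  apply: preimage_closed; last exact: closed_le.
  move=> y _; apply: continuous_comp; [exact: tc | exact: sq_cont].
have -> : [set x : 'cV[R]_p | sq x <= D ^+ 2] = (fun y : 'rV[R]_p => y^T) @` K'.
  apply/seteqP; split => [x hx|x [y hy <-]] //=.
  by exists x^T; rewrite /K' /= ?trmxK.
apply: continuous_compact => //.
exact: continuous_subspaceT.
Unshelve. all: by end_near. Qed.

End Cpt.
Set Implicit Arguments. Unset Strict Implicit. Unset Printing Implicit Defensive.
Import Order.TTheory GRing.Theory Num.Theory.
Import numFieldNormedType.Exports.
Local Open Scope classical_set_scope.
Local Open Scope ring_scope.

Lemma bnd_aux (R : realType) (l s d d0 s0 F c : R) :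
  0 < l -> d <= d0 - l / 2 * s ->
  2 * (l / 4) * d0 <= (l / 4) ^+ 2 * s + s0 ->
  2 * (l / 4) * - d <= (l / 4) ^+ 2 * s + F ->
  s0 <= c -> 16 * c < l ^+ 2 * s -> c < F.
Proof.
move=> l0 h1 h2 h3 h4 h5.
have h1' : l * d <= l * d0 - l * l / 2 * s.
  have := ler_wpM2l (ltW l0) h1; rewrite mulrBr !mulrA //.
rewrite expr2 in h2 h3 h5.
nra.
Qed.

Section Core3.
Variables (R : realType) (p : nat) (f : 'cV[R]_p -> 'cV[R]_p) (W : 'M[R]_p)
  (ts : 'cV[R]_p) (l eta c D : R).
Hypothesis hf : forall th, differentiable f th.
Hypothesis l0 : 0 < l.
Hypothesis heta : p%:R * eta <= l / 2.
Hypothesis H2 : forall phi, sq phi = 1 -> l <= quad (AA f W ts) phi.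
Hypothesis H3 : forall x, sq x <= D ^+ 2 ->
  mnormM (AA f W (ts + W *m x) - AA f W ts) <= eta.
Hypothesis hc : sq (W *m f ts) <= c.
Hypothesis hD : 16 * c < l ^+ 2 * D ^+ 2.

Lemma boundary x : sq x = D ^+ 2 -> c < sq (W *m f (ts + W *m x)).
Proof.
move=> hx.
have hx' : sq x <= D ^+ 2 by rewrite hx.
have h1 := mvt_step hf heta H2 H3 hx'.
set F := W *m f (ts + W *m x) in h1 *.
set F0 := W *m f ts in h1 *.
have l4 : 0 < l / 4 by rewrite divr_gt0.
have h2 := amgm x F0 l4.
have h3 := amgm x (- F) l4.
rewrite dotNr in h3.
have eF : sq (- F) = sq F by rewrite /sq dotNr dotC dotNr opprK.
rewrite eF in h3.
have hD2 := hD; rewrite -hx in hD2.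
exact: (bnd_aux l0 h1 h2 h3 hc hD2).
Qed.

Lemma exists_root : exists x, sq x <= D ^+ 2 /\ W *m f (ts + W *m x) = 0.
Proof.
pose G := fun x : 'cV[R]_p => sq (W *m f (ts + W *m x)).
have lW : linear (fun z : 'cV[R]_p => W *m z).
  by move=> a u v; rewrite mulmxDr scalemxAr.
have cW : continuous (fun z : 'cV[R]_p => W *m z) := linear_cont lW.
have Gc : continuous G.
  move=> x; rewrite /G.
  have -> : (fun x => sq (W *m f (ts + W *m x))) =
    (@sq R p) \o ((fun z => W *m z) \o (f \o (fun x => ts + W *m x))) by [].
  apply: (@continuous_comp _ _ _ _ (@sq R p)); last exact: sq_cont.
  apply: (@continuous_comp _ _ _ _ (fun z : 'cV[R]_p => W *m z)); last exact: cW.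
  apply: (@continuous_comp _ _ _ _ f); last exact: differentiable_continuous.
  have -> : (fun x : 'cV[R]_p => ts + W *m x) = cst ts + (fun z => W *m z) by [].
  apply: continuousD; [exact: cst_continuous | exact: cW].
have K0 : [set x : 'cV[R]_p | sq x <= D ^+ 2] !=set0.
  by exists 0; rewrite /= sq0 sqr_ge0.
have [x0 hx0 hmin] := compact_EVT_min K0 (@compact_K R p D) (continuous_subspaceT Gc).
have hx0' : sq x0 <= D ^+ 2 by move: hx0; rewrite inE.
have hlt : sq x0 < D ^+ 2.
  rewrite lt_neqAle hx0' andbT; apply/negP => /eqP e.
  have := boundary e.
  have : G x0 <= G 0 by apply: hmin; rewrite inE /= sq0 sqr_ge0.
  rewrite /G mulmx0 addr0 => h1 h2.
  have := le_lt_trans hc h2; rewrite ltNge h1 //.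
set th0 := ts + W *m x0.
set y := W *m f th0.
exists x0; split => //.
suff : sq y = 0 by move/sq_eq0.
pose g := fun z : 'cV[R]_p => sq (W *m z).
pose dg := fun z v : 'cV[R]_p => 2 * dot (W *m z) (W *m v).
have hg z : is_diff z g (dg z).
  have h1 : is_diff z (fun z => W *m z) (fun z => W *m z) := lin_diff lW z.
  have h2 := is_diff_sq (W *m z).
  exact: (is_diff_comp h1 h2).
pose phi := fun t : R => g (f (t *: (W *m y) + th0)).
have hd (t : R) : is_derive t 1 phi
    (dg (f (t *: (W *m y) + th0)) ('D_(W *m y) f (t *: (W *m y) + th0))).
  exact: (chain_derive (hf _) (hg _)).
have ephi t : phi t = G (t *: y + x0).
  rewrite /phi /G /g /th0; congr (sq (W *m f _)).
  by rewrite mulmxDr -scalemxAr addrCA.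
have nb : \forall t \near (0:R), sq (t *: y + x0) < D ^+ 2.
  have kc : {for (0:R), continuous (fun t : R => sq (t *: y + x0))}.
    apply: (@continuous_comp _ _ _ (fun t : R => t *: y + x0) (@sq R p)); last exact: sq_cont.
    have -> : (fun t : R => t *: y + x0) = ( *:%R^~ y) + cst x0 by [].
    by apply: continuousD; [exact: scalel_continuous | exact: cst_continuous].
  apply: (cvgr_lt _ kc).
  by rewrite /= scale0r add0r.
move/nbhs_ballP: nb => [e /= e0 he].
have hmin0 : is_derive (0:R) (1:R) phi (0:R).
  apply: (@derive1_at_min _ phi (-e) e 0).
  - have : 0 <= e by exact: ltW.
    move=> h; apply: le_trans h; by rewrite oppr_le0 ltW.
  - by move=> t _; case: (hd t).
  - by rewrite in_itv /= oppr_lt0 e0.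
  - move=> t ht; rewrite !ephi scale0r add0r; apply: hmin; rewrite inE /=; apply: ltW.
    apply: he; rewrite /ball /= sub0r normrN.
    by move: ht; rewrite in_itv /= ltr_norml => /andP[-> ->].
have e1 : 'D_(1:R) phi (0:R) = 0 by case: hmin0.
have e2 : 'D_(1:R) phi (0:R) = dg (f (0 *: (W *m y) + th0)) ('D_(W *m y) f (0 *: (W *m y) + th0)).
  by case: (hd 0).
rewrite e1 scale0r add0r /dg D_jac // -/y AA_quad in e2.
have hq : quad (AA f W th0) y = 0.
  by move/eqP: e2; rewrite eq_sym mulf_eq0 pnatr_eq0 /= oppr_eq0 => /eqP.
have := quad_lb heta H2 H3 y hx0'; rewrite -/th0 hq => hle.
apply/eqP; rewrite eq_le sq_ge0 andbT.
by move: hle; rewrite pmulr_rle0 // divr_gt0.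
Qed.

End Core3.
Set Implicit Arguments. Unset Strict Implicit. Unset Printing Implicit Defensive.
Import Order.TTheory GRing.Theory Num.Theory.
Import numFieldNormedType.Exports.
Local Open Scope classical_set_scope.
Local Open Scope ring_scope.

Section Wrap.
Variables (R : realType) (p : nat).

Lemma enormE (x : 'cV[R]_p) : enorm x = Num.sqrt (sq x).
Proof. by rewrite /enorm /sq /dot; congr Num.sqrt; apply: eq_bigr => i _; rewrite expr2. Qed.

Lemma enorm1 (x : 'cV[R]_p) : enorm x = 1 -> sq x = 1.
Proof. by move=> h; rewrite -(sqr_sqrtr (sq_ge0 x)) -enormE h expr1n. Qed.

Lemma good_root (f : 'cV[R]_p -> 'cV[R]_p) (V : 'M[R]_p) (ts : 'cV[R]_p)
    (l c0 D eta : R) :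
  V \in unitmx -> (forall th, differentiable f th) -> 0 < l ->
  p%:R * eta <= l / 2 -> 16 * c0 ^+ 2 < l ^+ 2 * D ^+ 2 -> 0 <= D ->
  ~ (inf [set (phi^T *m invmx V *m jacobianN f ts *m invmx V *m phi) 0 0
          | phi in [set phi : 'cV[R]_p | enorm phi = 1]] < l) ->
  ~ (eta%:E < ereal_sup [set (mnormM (invmx V *m (jacobianN f theta
          - jacobianN f ts) *m invmx V))%:E
          | theta in [set theta : 'cV[R]_p | (enorm (V *m (theta - ts)) <= D)%R]])%E ->
  ~ (enorm (invmx V *m f ts) > c0) ->
  exists theta, f theta = 0 /\ enorm (V *m (theta - ts)) < D + 1.
Proof.
move=> Vu hf l0 heta hD D0 G2 G3 G4.
set W := invmx V.
have VW (z : 'cV[R]_p) : V *m (W *m z) = z by rewrite mulmxA mulmxV // mul1mx.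
have H2 : forall phi, sq phi = 1 -> l <= quad (AA f W ts) phi.
  move=> phi hphi.
  set S := [set (phi^T *m W *m jacobianN f ts *m W *m phi) 0 0
          | phi in [set phi : 'cV[R]_p | enorm phi = 1]].
  have hinf : l <= inf S by rewrite leNgt; apply/negP.
  apply: (le_trans hinf); apply: ge_inf.
    exists (- (mnormM (AA f W ts) * p%:R)) => _ [psi hpsi <-].
    have hs := enorm1 hpsi.
    have := quad_bound (AA f W ts) psi; rewrite hs mulr1 ler_norml => /andP[h _].
    by move: h; rewrite /quad /AA !mulmxA.
  exists phi; first by rewrite /= enormE hphi sqrtr1.
  by rewrite /quad /AA !mulmxA.
have H3 : forall x, sq x <= D ^+ 2 -> mnormM (AA f W (ts + W *m x) - AA f W ts) <= eta.
  move=> x hx.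
  have hsup : (ereal_sup [set (mnormM (W *m (jacobianN f theta
          - jacobianN f ts) *m W))%:E
          | theta in [set theta : 'cV[R]_p | (enorm (V *m (theta - ts)) <= D)%R]] <= eta%:E)%E.
    by rewrite leNgt; apply/negP.
  have : ((mnormM (AA f W (ts + W *m x) - AA f W ts))%:E <= eta%:E)%E.
    apply: le_trans hsup; apply: ereal_sup_ubound.
    exists (ts + W *m x).
      rewrite /= addrAC subrr add0r VW enormE.
      by rewrite -(ger0_norm D0) -sqrtr_sqr ler_sqrt // sqr_ge0.
    by rewrite /AA mulmxBr mulmxBl.
  by rewrite lee_fin.
have hc : sq (W *m f ts) <= c0 ^+ 2.
  have h4 : enorm (W *m f ts) <= c0 by rewrite leNgt; apply/negP.
  have c00 : 0 <= c0 by apply: le_trans h4; rewrite enormE sqrtr_ge0.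
  rewrite -(sqr_sqrtr (sq_ge0 _)) -enormE.
  by rewrite ler_sqr ?nnegrE // enormE sqrtr_ge0.
have [x [hx hx0]] := exists_root hf l0 heta H2 H3 hc hD.
exists (ts + W *m x); split.
  by rewrite -[f _]VW hx0 mulmx0.
rewrite addrAC subrr add0r VW enormE.
apply: (le_lt_trans (_ : _ <= D)); last by rewrite ltrDl.
by rewrite -(ger0_norm D0) -sqrtr_sqr ler_sqrt // sqr_ge0.
Qed.

End Wrap.
Set Implicit Arguments. Unset Strict Implicit. Unset Printing Implicit Defensive.
Import Order.TTheory GRing.Theory Num.Theory.
Import numFieldNormedType.Exports.
Local Open Scope classical_set_scope.
Local Open Scope ring_scope.

Lemma Pout_lt d (T : measurableType d) (R : realType) (P : probability T R)
    (A : set T) (e r : R) :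
  (Pout P A <= e%:E)%E -> e < r ->
  exists B, measurable B /\ A `<=` B /\ (P B < r%:E)%E.
Proof.
move=> h er.
have : (Pout P A < r%:E)%E by apply: le_lt_trans h _; rewrite lte_fin.
by move/ereal_inf_lt => [_ [B [mB AB] <-] PB]; exists B.
Qed.

Lemma fin_lt (R : realType) (x : \bar R) (r : R) :
  (0 <= x)%E -> (x < r%:E)%E -> exists u, x = u%:E /\ u < r.
Proof.
by case: x => [u| |] //= h1 h2; exists u; split => //; rewrite -lte_fin.
Qed.

Theorem theoremE1 (d : measure_display) (T : measurableType d) (R : realType)
  (P : probability T R) (p : nat)
  (u : nat -> T -> 'cV[R]_p -> 'cV[R]_p)
  (V : nat -> 'M[R]_p) (thetas : nat -> 'cV[R]_p) :
  (forall n w theta, differentiable (u n w) theta) ->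
  (forall n, V n \in unitmx) ->
  (forall n, (V n)^T = V n) ->
  (* (G1) *)
  (opnorm (invmx (V n)) @[n --> \oo] --> 0) ->
  (* (G2) *)
  (exists l : R, 0 < l /\
     forall e : R, 0 < e -> \forall n \near \oo,
       (Pout P ([set w | inf [set ((phi^T *m invmx (V n) *m jacobianN (u n w) (thetas n)
                                    *m invmx (V n) *m phi) 0 0)
                            | phi in [set phi : 'cV[R]_p | enorm phi = 1]] < l])%R
        <= e%:E)%E) ->
  (* (G3) *)
  (forall dd : R, 0 < dd -> forall eta : R, 0 < eta -> forall e : R, 0 < e ->
     \forall n \near \oo,
       (Pout P [set w | (eta%:E < ereal_sup
           [set (mnormM (invmx (V n) *m (jacobianN (u n w) theta
                          - jacobianN (u n w) (thetas n)) *m invmx (V n)))%:E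
           | theta in [set theta : 'cV[R]_p |
                        (enorm (V n *m (theta - thetas n)) <= dd)%R]])%E]
        <= e%:E)%E) ->
  (* (G4) *)
  (forall e : R, 0 < e -> exists dd : R, \forall n \near \oo,
     (Pout P ([set w | enorm (invmx (V n) *m u n w (thetas n)) > dd])%R <= e%:E)%E) ->
  forall e : R, 0 < e -> exists dd : R, 0 < dd /\ \forall n \near \oo,
    (Pin P ([set w | exists theta : 'cV[R]_p,
                      u n w theta = 0 /\ enorm (V n *m (theta - thetas n)) < dd])%R
     > (1 - e)%:E)%E.
Proof.
move=> hdiff hunit hsym G1 [l [l0 G2]] G3 G4 e e0.
have e8 : 0 < e / 8 by rewrite divr_gt0.
have e84 : e / 8 < e / 4 by rewrite ltr_pM2l // ltf_pV2 ?posrE // ltr_nat.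
have [c0 G4'] := G4 _ e8.
pose D := 4 * (`|c0| + 1) / l.
have D0 : 0 < D by rewrite /D divr_gt0 // mulr_gt0 // ltr_wpDl.
have hD : 16 * c0 ^+ 2 < l ^+ 2 * D ^+ 2.
  have lD : l * D = 4 * (`|c0| + 1) by rewrite /D mulrCA mulfV ?gt_eqF // mulr1.
  rewrite -exprMn lD -real_normK ?num_real //.
  have a0 : 0 <= `|c0| by [].
  move: a0; move: (`|c0|) => a a0; nra.
pose eta := l / (2 * (p%:R + 1)).
have eta0 : 0 < eta by rewrite /eta divr_gt0 // mulr_gt0 // ltr_wpDl.
have heta : p%:R * eta <= l / 2.
  rewrite /eta mulrA ler_pdivrMr; last by rewrite mulr_gt0 // ltr_wpDl.
  have q0 : 0 <= p%:R :> R by [].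
  move: q0; move: (p%:R : R) => q q0; nra.
exists (D + 1); split; first by rewrite ltr_wpDl // ltW.
have G2' := G2 _ e8.
have G3' := G3 D D0 eta eta0 _ e8.
move: G2' G3' G4'; apply: filterS3 => n h2 h3 h4.
have [B2 [mB2 [sB2 PB2]]] := Pout_lt h2 e84.
have [B3 [mB3 [sB3 PB3]]] := Pout_lt h3 e84.
have [B4 [mB4 [sB4 PB4]]] := Pout_lt h4 e84.
have [b2 [Eb2 b2e]] := fin_lt (measure_ge0 P B2) PB2.
have [b3 [Eb3 b3e]] := fin_lt (measure_ge0 P B3) PB3.
have [b4 [Eb4 b4e]] := fin_lt (measure_ge0 P B4) PB4.
pose U := B2 `|` B3 `|` B4.
have mU : measurable U by apply: measurableU => //; apply: measurableU.
have PU : (P U < (3 * e / 4)%:E)%E.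
  apply: (@le_lt_trans _ _ (P (B2 `|` B3) + P B4)%E).
    by apply: measureU2 => //; apply: measurableU.
  apply: (@le_lt_trans _ _ (P B2 + P B3 + P B4)%E).
    by apply: leeD => //; apply: measureU2.
  rewrite Eb2 Eb3 Eb4 -!EFinD lte_fin; lra.
have [uu [Euu uue]] := fin_lt (measure_ge0 P U) PU.
have PC : P (~` U) = (1 - uu)%:E by rewrite probability_setC // Euu -EFinB.
apply: (@lt_le_trans _ _ (P (~` U))).
  by rewrite PC lte_fin; lra.
apply: ereal_sup_ubound; exists (~` U) => //; split; first exact: measurableC.
move=> w hw.
have nU2 : w \notin B2 by apply/negP; rewrite inE => hb; apply: hw; left; left.
have nU3 : ~ B3 w by move=> hb; apply: hw; left; right.
have nU4 : ~ B4 w by move=> hb; apply: hw; right.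
apply: (@good_root R p (u n w) (V n) (thetas n) l c0 D eta) => //.
- by apply: ltW.
- by move=> h; move/negP: nU2; rewrite inE; apply; apply: sB2.
- by move=> h; apply: nU3; apply: sB3.
- by move=> h; apply: nU4; apply: sB4.
Qed.
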